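(* Let $\kappa$ be a cardinal for which there exists a maximal independent family of size $\kappa$. Then there exists a maximal independent family of size $\kappa$ which is not densely maximal. In particular, there is always a maximal, non-densely maximal independent family of size $\mathfrak i$.
   Context: A family $\mathcal I \subseteq [\omega]^\omega$ is independent if for all finite disjoint $\mathcal A, \mathcal B \subseteq \mathcal I$ the set $\bigcap \mathcal A \setminus \bigcup \mathcal B$ is infinite; it is a maximal independent family (m.i.f.) if it is maximal under inclusion among independent families. $\mathfrak i$ denotes the least size of a maximal independent family. $\mathsf{FF}(\mathcal I)$ is the set of finite partial functions $h:\mathcal I \to 2$; for $h\in\mathsf{FF}(\mathcal I)$, $\mathcal I^h := \bigcap_{A \in \mathrm{dom}(h)} A^{h(A)}$ where $A^0 = A$ and $A^1 = \omega\setminus A$ (Boolean combinations). An independent family $\mathcal I$ is densely maximal if for every $X \in [\omega]^\omega$ and every $h \in \mathsf{FF}(\mathcal I)$ there is $h' \supseteq h$ in $\mathsf{FF}(\mathcal I)$ such that $\mathcal I^{h'} \setminus X$ or $\mathcal I^{h'} \cap X$ is finite. *)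

(* Defs.v *)
From mathcomp Require Import all_boot.
From mathcomp Require Import boolp classical_sets functions cardinality.
Set Implicit Arguments. Unset Strict Implicit. Unset Printing Implicit Defensive.
Local Open Scope classical_set_scope.

Definition ifam := set (set nat).

Definition independent (I : ifam) : Prop :=
  (forall A, I A -> infinite_set A) /\
  forall (AA BB : ifam),
    finite_set AA -> finite_set BB -> AA `<=` I -> BB `<=` I ->
    AA `&` BB = set0 ->
    infinite_set [set n : nat | (forall A, AA A -> A n) /\ (forall B, BB B -> ~ B n)].

Definition mif (I : ifam) : Prop :=
  independent I /\ forall J : ifam, independent J -> I `<=` J -> J = I.

(* finite partial functions h : I -> 2, encoded as option-valued maps
   with finite domain contained in I; false = 0, true = 1. *)
Definition dom (h : set nat -> option bool) : ifam := [set A | h A <> None].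

Definition FF (I : ifam) (h : set nat -> option bool) : Prop :=
  finite_set (dom h) /\ dom h `<=` I.

Definition pow (A : set nat) (b : bool) : set nat := if b then ~` A else A.

(* I^h = ⋂_{A ∈ dom h} A^{h(A)} (the index ifam I only constrains dom h) *)
Definition bcomb (h : set nat -> option bool) : set nat :=
  [set n | forall A b, h A = Some b -> pow A b n].

Definition extends (h' h : set nat -> option bool) : Prop :=
  forall A b, h A = Some b -> h' A = Some b.

Definition densely_maximal (I : ifam) : Prop :=
  independent I /\
  forall (X : set nat) (h : set nat -> option bool),
    infinite_set X -> FF I h ->
    exists h', FF I h' /\ extends h' h /\
      (finite_set (bcomb h' `\` X) \/ finite_set (bcomb h' `&` X)).

(* Main.v *)
Require Import Defs.
From mathcomp Require Import all_boot.
From mathcomp Require Import boolp classical_sets functions cardinality.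
Set Implicit Arguments.
Local Open Scope classical_set_scope.

Definition comb (AA BB : ifam) : set nat :=
  [set n : nat | (forall A, AA A -> A n) /\ (forall B, BB B -> ~ B n)].

Lemma unbounded_infinite (S : set nat) :
  (forall N, exists n, N <= n /\ S n) -> infinite_set S.
Proof.
move=> H /finite_seqP[s Hs].
have [n [Hn Sn]] := H (\max_(i <- s) i).+1.
have : n \in s by rewrite Hs in Sn.
move=> ins; have := @leq_bigmax_seq _ _ xpredT (fun i => i) n ins isT.
by move=> h; have := leq_trans Hn h; rewrite ltnn.
Qed.

Lemma infinite_unbounded (S : set nat) :
  infinite_set S -> forall N, exists n, N <= n /\ S n.
Proof.
move=> H N; apply: contra_notP H => nH.
apply: (sub_finite_set _ (finite_II N)) => n Sn /=.
rewrite ltnNge; apply/negP => le; apply: nH; by exists n.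
Qed.

Lemma inj_infinite (f : nat -> nat) (S : set nat) :
  injective f -> infinite_set S -> infinite_set (f @` S).
Proof.
move=> fi; rewrite (eq_finite_set (@inj_card_eq _ _ S f _)) //.
by move=> x y _ _; apply: fi.
Qed.

Lemma inj_finite_pre {T U} (f : T -> U) (S : set T) (B : set U) :
  injective f -> f @` S `<=` B -> finite_set B -> finite_set S.
Proof.
move=> fi sub fB; have := sub_finite_set sub fB.
rewrite (eq_finite_set (@inj_card_eq _ _ S f _)) //.
by move=> x y _ _; apply: fi.
Qed.

Definition eqv (I : ifam) m n := forall A, I A -> (A m <-> A n).
Definition rk (I : ifam) n := count (fun m => `[< eqv I m n >]) (iota 0 n).
Definition Ysplit (I : ifam) : set nat := [set n | odd (rk I n)].

Lemma class_infinite I : independent I -> finite_set I ->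
  forall n, infinite_set [set m | eqv I m n].
Proof.
move=> [_ HI] fI n.
apply: (sub_infinite_set (A := comb [set A | I A /\ A n] [set A | I A /\ ~ A n])).
  move=> m [h1 h2] A IA; split=> An.
    case: (pselect (A n)) => // nAn.
    by exfalso; apply: (h2 A) => //; split.
  exact: (h1 A).
apply: HI.
- by apply: sub_finite_set fI => A [].
- by apply: sub_finite_set fI => A [].
- by move=> A [].
- by move=> A [].
- by apply/seteqP; split=> [A [[_ ?] [_ ?]]|A //].
Qed.

Lemma rk_next I c1 c2 : c1 < c2 -> eqv I c1 c2 ->
  (forall m, c1 < m < c2 -> ~ eqv I m c2) -> rk I c2 = (rk I c1).+1.
Proof.
move=> lt e12 nm; rewrite /rk.
have E : c2 = c1 + (1 + (c2 - c1.+1)) by rewrite add1n addnS -addSn subnKC.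
rewrite [in iota 0 c2]E iotaD iotaD count_cat count_cat add0n /=.
have -> : count (fun m => `[< eqv I m c2 >]) (iota 0 c1)
  = count (fun m => `[< eqv I m c1 >]) (iota 0 c1).
  apply: eq_in_count => m _; apply: asbool_equiv_eq.
  split=> h A IA; [rewrite (h A IA) (e12 A IA) //|rewrite -(e12 A IA) (h A IA) //].
have -> : `[< eqv I c1 c2 >] = true by apply/asboolP.
have -> : count (fun m => `[< eqv I m c2 >]) (iota (c1 + 1) (c2 - c1.+1)) = 0.
  apply/eqP; rewrite -leqn0 leqNgt -has_count; apply/hasP => -[m].
  rewrite mem_iota addn1 subnKC // => /andP[h1 h2] /asboolP.
  apply: nm; by rewrite h1 h2.
by rewrite addn0 addn1.
Qed.

Lemma class_parity I : independent I -> finite_set I -> forall n N,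
  (exists c, N <= c /\ eqv I c n /\ Ysplit I c) /\
  (exists c, N <= c /\ eqv I c n /\ ~ Ysplit I c).
Proof.
move=> HI fI n N.
have inf := infinite_unbounded (@class_infinite I HI fI n).
have [c1 [Nc1 e1]] := inf N.
have exP : exists c, (fun c => `[< c1 < c /\ eqv I c n >]) c.
  have [c [h1 h2]] := inf c1.+1; exists c; exact/asboolP.
case: (ex_minnP exP) => c2 /asboolP [lt e2] minc.
have e12 : eqv I c1 c2 by move=> A IA; rewrite (e1 A IA) (e2 A IA).
have r : rk I c2 = (rk I c1).+1.
  apply: rk_next => // m /andP[h1 h2] em.
  have : c2 <= m.
    apply: minc; apply/asboolP; split=> // A IA; rewrite (em A IA) (e2 A IA) //.
  by rewrite leqNgt h2.
have Nc2 : N <= c2 by apply: leq_trans Nc1 (ltnW lt).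
rewrite /Ysplit /=; case o: (odd (rk I c1)).
  split; [exists c1 | exists c2]; split=> //; split=> //.
  by rewrite r /= o.
split; [exists c2 | exists c1]; split=> //; split=> //; last by rewrite o.
by rewrite r /= o.
Qed.

Lemma mif_infinite I : mif I -> infinite_set I.
Proof.
move=> [HI Hmax] fI.
set Y := Ysplit I.
have par := class_parity HI fI.
have indK : independent (I `|` [set Y]).
  have Hc : forall AA BB : ifam, finite_set AA -> finite_set BB ->
      AA `<=` I `|` [set Y] -> BB `<=` I `|` [set Y] -> AA `&` BB = set0 ->
      infinite_set (comb AA BB).
    move=> AA BB fA fB sA sB dAB.
    have sa : AA `\ Y `<=` I by move=> A [/sA [//|/= ->]].
    have sb : BB `\ Y `<=` I by move=> A [/sB [//|/= ->]].
    have ci : infinite_set (comb (AA `\ Y) (BB `\ Y)).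
      apply: HI.2; [exact: finite_setD|exact: finite_setD|exact: sa|exact: sb|].
      apply/seteqP; split=> // A [[a1 _] [b1 _]].
      by rewrite -dAB; split.
    have [n0 [h1 h2]] := infinite_setN0 ci.
    apply: unbounded_infinite => N.
    have [c [Nc [ec hc]]] : exists c, N <= c /\ eqv I c n0 /\
        (AA Y -> Y c) /\ (BB Y -> ~ Y c).
      have [[c [Nc [ec Yc]]] [c' [Nc' [ec' Yc']]]] := par n0 N.
      case: (pselect (AA Y)) => AY.
        exists c; split=> //; split=> //; split=> // BY.
        have : (AA `&` BB) Y by split.
        by rewrite dAB.
      by exists c'; split=> //; split=> //; split=> // /AY.
    exists c; split=> //; split.
      move=> A AA_A; case: (pselect (A = Y)) => [EA|nAY].
        by rewrite EA; apply: (proj1 hc); rewrite -EA.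
      have IA : I A by apply: sa.
      by rewrite (ec A IA); apply: h1.
    move=> B BB_B; case: (pselect (B = Y)) => [EB|nBY].
      by rewrite EB; apply: (proj2 hc); rewrite -EB.
    have IB : I B by apply: sb.
    by rewrite (ec B IB); apply: h2.
  split=> [A [/HI.1 //|/= ->]|]; last exact: Hc.
  apply: (sub_infinite_set (A := comb [set Y] set0)); first by move=> n [h _]; exact: h.
  apply: Hc; [exact: finite_set1|exact: finite_set0| |by []|by rewrite setI0].
  by move=> Z /= ->; right.
have eqK := Hmax _ indK (fun A h => or_introl h).
have IY : I Y by rewrite -eqK; right.
have [[c [_ [ec Yc]]] [c' [_ [ec' Yc']]]] := par 0 0.
by apply: Yc'; apply/(ec' Y IY)/(ec Y IY).
Qed.

Definition fP : set nat := [set n | ~~ odd n].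
Definition sg (e : nat -> set nat) (D : set nat) : set nat :=
  match pselect (exists k, D = e k) with
  | left h => e (projT1 (cid h)).+1 | right _ => D end.
Definition JD e D : set nat := [set n | (~~ odd n /\ sg e D n./2) \/ (odd n /\ D n./2)].
Definition ps e D : set nat := match pselect (exists k, D = e k) with
 | left h => if projT1 (cid h) is k.+1 then JD e (e k) else fP
 | right _ => JD e D end.

Lemma half_odd m : uphalf (m.*2) = m.
Proof. by have := half_bit_double m true; rewrite add1n. Qed.
Lemma odd_odd m : odd (m.*2.+1).
Proof. by rewrite /= odd_double. Qed.

Lemma JD_odd e D m : JD e D (m.*2.+1) <-> D m.
Proof.
rewrite /JD /= half_odd odd_double /=; split; first by case=> -[].
by move=> h; right.
Qed.
Lemma JD_even e D m : JD e D (m.*2) <-> sg e D m.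
Proof.
rewrite /JD /= doubleK odd_double /=; split; first by case=> -[].
by move=> h; left.
Qed.
Lemma fP_odd m : ~ fP (m.*2.+1).
Proof. by rewrite /fP /= odd_double. Qed.
Lemma fP_even m : fP (m.*2).
Proof. by rewrite /fP /= odd_double. Qed.
Lemma odd_dec n : odd n -> n = (n./2).*2.+1.
Proof. by move=> o; rewrite -[in LHS](odd_double_half n) o. Qed.
Lemma even_dec n : ~~ odd n -> n = (n./2).*2.
Proof. by move=> o; rewrite even_halfK. Qed.


Lemma sg_e e k : injective e -> sg e (e k) = e k.+1.
Proof.
move=> ei; rewrite /sg; case: pselect => [h|nh]; last by exfalso; apply: nh; exists k.
by case: (cid h) => k' /= /ei ->.
Qed.
Lemma sg_ne e D : ~ (exists k, D = e k) -> sg e D = D.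
Proof. by move=> nh; rewrite /sg; case: pselect. Qed.

Lemma sg_inj e : injective e -> injective (sg e).
Proof.
move=> ei D1 D2.
case: (pselect (exists k, D1 = e k)) => [[k1 ->]|n1];
case: (pselect (exists k, D2 = e k)) => [[k2 ->]|n2].
- by rewrite !sg_e // => /ei [->].
- by rewrite sg_e // sg_ne // => E; exfalso; apply: n2; exists k1.+1.
- by rewrite sg_e // sg_ne // => E; exfalso; apply: n1; exists k2.+1.
- by rewrite !sg_ne.
Qed.

Lemma sg_ne0 e D : injective e -> sg e D <> e 0.
Proof.
move=> ei; case: (pselect (exists k, D = e k)) => [[k ->]|n].
  by rewrite sg_e // => /ei.
by rewrite sg_ne // => E; apply: n; exists 0.
Qed.

Lemma sg_I (I : ifam) e D : (forall k, I (e k)) -> I D -> I (sg e D).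
Proof.
move=> eI ID; case: (pselect (exists k, D = e k)) => [[k E]|n].
  rewrite /sg; case: pselect => // h; exact: eI.
by rewrite sg_ne.
Qed.

Lemma ps_e e k : injective e -> ps e (e k) = if k is k'.+1 then JD e (e k') else fP.
Proof.
move=> ei; rewrite /ps; case: pselect => [h|nh]; last by exfalso; apply: nh; exists k.
by case: (cid h) => k' /= /ei ->.
Qed.
Lemma ps_ne e D : ~ (exists k, D = e k) -> ps e D = JD e D.
Proof. by move=> nh; rewrite /ps; case: pselect. Qed.

Lemma JD_ne_fP e D m : D m -> JD e D <> fP.
Proof.
move=> Dm E; apply: (@fP_odd m); rewrite -E; exact/JD_odd.
Qed.

Lemma JD_inj e : injective (JD e).
Proof.
move=> D1 D2 E; rewrite predeqE => m.
by rewrite -(JD_odd e D1) -(JD_odd e D2) E.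
Qed.

Definition Jset (I : ifam) e : ifam := ps e @` I.

Lemma Jset_cases I e X : (forall k, I (e k)) -> Jset I e X ->
  X = fP \/ exists2 D, I D & X = JD e D.
Proof.
move=> eI [D ID <-]; rewrite /ps; case: pselect => [h|nh]; last by right; exists D.
by case: (projT1 (cid h)) => [|k]; [left|right; exists (e k)].
Qed.

Lemma Jset_fP I e : injective e -> (forall k, I (e k)) -> Jset I e fP.
Proof. by move=> ei eI; exists (e 0) => //; rewrite ps_e. Qed.

Lemma Jset_JD I e D : injective e -> (forall k, I (e k)) -> I D -> Jset I e (JD e D).
Proof.
move=> ei eI ID; case: (pselect (exists k, D = e k)) => [[k ->]|n].
  by exists (e k.+1) => //; rewrite ps_e.
by exists D => //; rewrite ps_ne.
Qed.

Lemma ps_cases (I : ifam) e D : injective e -> (forall k, I (e k)) -> I D ->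
  (ps e D = fP /\ D = e 0) \/ (exists X, [/\ ps e D = JD e X, D = sg e X & I X]).
Proof.
move=> ei eI ID; case: (pselect (exists k, D = e k)) => [[[|k] ->]|n].
- by left; rewrite ps_e.
- by right; exists (e k); rewrite ps_e // sg_e.
- by right; exists D; rewrite ps_ne // sg_ne.
Qed.

Lemma ps_inj (I : ifam) e : injective e -> (forall k, I (e k)) ->
  (forall D, I D -> exists m, D m) -> {in I &, injective (ps e)}.
Proof.
move=> ei eI ne D1 D2; rewrite !inE => I1 I2.
case: (@ps_cases I e _ ei eI I1) => [[-> ->]|[X1 [-> -> IX1]]];
case: (@ps_cases I e _ ei eI I2) => [[-> ->]|[X2 [-> -> IX2]]] //.
- by have [m Xm] := ne _ IX2; move=> E; exfalso; exact: (@JD_ne_fP e _ _ Xm (esym E)).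
- by have [m Xm] := ne _ IX1; move=> E; exfalso; exact: (@JD_ne_fP e _ _ Xm E).
- by move/JD_inj ->.
Qed.

Definition pre (I : ifam) e (AA : ifam) : ifam := [set D | I D /\ AA (JD e D)].

Lemma comb_g (I : ifam) e AA BB : (forall k, I (e k)) ->
  AA `<=` Jset I e -> BB `<=` Jset I e -> ~ AA fP ->
  (fun m => m.*2.+1) @` comb (pre I e AA) (pre I e BB) `<=` comb AA BB.
Proof.
move=> eI sA sB nA _ [m [h1 h2] <-]; split.
  move=> X AX; case: (Jset_cases eI (sA _ AX)) => [EX|[D ID EX]].
    by rewrite EX in AX.
  by rewrite EX; apply/JD_odd; apply: h1; split=> //; rewrite -EX.
move=> X BX; case: (Jset_cases eI (sB _ BX)) => [EX|[D ID EX]].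
  by rewrite EX; exact: fP_odd.
by rewrite EX => /JD_odd; apply: h2; split=> //; rewrite -EX.
Qed.

Lemma comb_f (I : ifam) e AA BB (a b : ifam) : (forall k, I (e k)) ->
  AA `<=` Jset I e -> BB `<=` Jset I e -> ~ BB fP ->
  sg e @` pre I e AA `<=` a -> sg e @` pre I e BB `<=` b ->
  double @` comb a b `<=` comb AA BB.
Proof.
move=> eI sA sB nB sa sb _ [m [h1 h2] <-]; split.
  move=> X AX; case: (Jset_cases eI (sA _ AX)) => [EX|[D ID EX]].
    by rewrite EX; exact: fP_even.
  rewrite EX; apply/JD_even; apply: h1; apply: sa; exists D => //.
  by split=> //; rewrite -EX.
move=> X BX; case: (Jset_cases eI (sB _ BX)) => [EX|[D ID EX]].
  by rewrite EX in BX.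
rewrite EX => /JD_even; apply: h2; apply: sb; exists D => //.
by split=> //; rewrite -EX.
Qed.

Lemma pre_fin (I : ifam) e AA : finite_set AA -> finite_set (pre I e AA).
Proof.
move=> fA; apply: (inj_finite_pre (@JD_inj e) _ fA).
by move=> _ [D [_ h] <-].
Qed.

Lemma pre_sub (I : ifam) e AA : pre I e AA `<=` I.
Proof. by move=> D []. Qed.

Lemma pre_disj (I : ifam) e AA BB : AA `&` BB = set0 ->
  pre I e AA `&` pre I e BB = set0.
Proof.
move=> d; apply/seteqP; split=> // D [[_ h1] [_ h2]].
have : (AA `&` BB) (JD e D) by split.
by rewrite d.
Qed.

Lemma sg_disj e (a b : ifam) : injective e -> a `&` b = set0 ->
  sg e @` a `&` sg e @` b = set0.
Proof.
move=> ei d; apply/seteqP; split=> // X [[D1 h1 E1] [D2 h2 E2]].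
have E : D1 = D2 by apply: (sg_inj ei); rewrite E1 E2.
have : (a `&` b) D1 by split=> //; rewrite E.
by rewrite d.
Qed.

Lemma succ_double_inj : injective (fun m => m.*2.+1).
Proof. by move=> x y /succn_inj/double_inj. Qed.

Lemma Jset_indep (I : ifam) e : independent I -> injective e ->
  (forall k, I (e k)) -> independent (Jset I e).
Proof.
move=> HI ei eI.
have Hc : forall AA BB : ifam, finite_set AA -> finite_set BB ->
    AA `<=` Jset I e -> BB `<=` Jset I e -> AA `&` BB = set0 ->
    infinite_set (comb AA BB).
  move=> AA BB fA fB sA sB d.
  case: (pselect (AA fP)) => AP.
    have nB : ~ BB fP.
      move=> BP; have : (AA `&` BB) fP by split.
      by rewrite d.
    apply: (sub_infinite_set (comb_f eI sA sB nB (fun x h => h) (fun x h => h))).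
    apply: inj_infinite; first exact: double_inj.
    apply: HI.2.
    - exact/finite_image/pre_fin.
    - exact/finite_image/pre_fin.
    - by move=> _ [D [ID _] <-]; apply: sg_I.
    - by move=> _ [D [ID _] <-]; apply: sg_I.
    - by apply: sg_disj => //; apply: pre_disj.
  apply: (sub_infinite_set (comb_g eI sA sB AP)).
  apply: inj_infinite; first exact: succ_double_inj.
  apply: HI.2.
  - exact: pre_fin.
  - exact: pre_fin.
  - exact: pre_sub.
  - exact: pre_sub.
  - exact: pre_disj.
split; last exact: Hc.
move=> X JX.
apply: (sub_infinite_set (A := comb [set X] set0)); first by move=> n [h _]; exact: h.
apply: Hc; [exact: finite_set1|exact: finite_set0| |by []|by rewrite setI0].
by move=> Z /= ->.
Qed.

Lemma odd_of_nfP n : ~ fP n -> odd n.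
Proof. by move=> h; apply/negPn/negP. Qed.

Lemma Jset_max (I : ifam) e : mif I -> injective e -> (forall k, I (e k)) ->
  forall J' : ifam, independent J' -> Jset I e `<=` J' -> J' = Jset I e.
Proof.
move=> [HI Hmax] ei eI J' HJ sJ.
have ne : forall D, I D -> exists m, D m.
  by move=> D /HI.1 /infinite_setN0 [m h]; exists m.
apply/seteqP; split=> [Y J'Y|]; last exact: sJ.
case: (pselect (Jset I e Y)) => // nY; exfalso.
set Y' := [set m | Y (m.*2.+1)].
have JfP := @Jset_fP I e ei eI.
have nYfP : Y <> fP by move=> E; apply: nY; rewrite E.
case: (pselect (I Y')) => IY'.
  have JJ := @Jset_JD I e _ ei eI IY'.
  have := HJ.2 [set JD e Y'] [set fP; Y] (finite_set1 _) (finite_set2 _ _).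
  have [m Ym] := ne _ IY'.
  case/(_ _ _ _)/infinite_setN0.
  - by move=> Z /= ->; apply: sJ.
  - by move=> Z /= [->|->] //; apply: sJ.
  - apply/seteqP; split=> // Z [/= -> [E|E]].
      exact: (@JD_ne_fP e _ _ Ym E).
    by apply: nY; rewrite -E.
  move=> n [h1 h2].
  have o : odd n by apply: odd_of_nfP => h; apply: (h2 fP) => //; left.
  have := h1 (JD e Y') erefl; rewrite (@odd_dec n o) => /JD_odd Yn.
  by apply: (h2 Y); [right|rewrite (@odd_dec n o)].
pose K := I `|` [set Y'].
have Hc : forall AA BB : ifam, finite_set AA -> finite_set BB ->
    AA `<=` K -> BB `<=` K -> AA `&` BB = set0 -> infinite_set (comb AA BB).
  move=> AA BB fA fB sA sB d fin.
  pose AS : ifam := JD e @` (AA `&` I) `|` [set X | X = Y /\ AA Y'].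
  pose BS : ifam := JD e @` (BB `&` I) `|` [set X | X = Y /\ BB Y'] `|` [set fP].
  apply: (HJ.2 AS BS).
  - rewrite /AS finite_setU; split.
      by apply: finite_image; apply: sub_finite_set fA => ? [].
    by apply: sub_finite_set (finite_set1 Y) => ? [->].
  - rewrite /BS !finite_setU; split; last exact: finite_set1.
    split; first by apply: finite_image; apply: sub_finite_set fB => ? [].
    by apply: sub_finite_set (finite_set1 Y) => ? [->].
  - move=> X [[D [_ ID] <-]|[-> _]] //; apply: sJ; exact: (@Jset_JD I e _ ei eI).
  - move=> X [[[D [_ ID] <-]|[-> _]]|/= ->] //; apply: sJ => //; exact: (@Jset_JD I e _ ei eI).
  - apply/seteqP; split=> // X [HA HB].
    case: HA => [[D1 [A1 I1] E1]|[E1 A1]];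
    case: HB => [[[D2 [B2 I2] E2]|[E2 B2]]|E2].
    + have E : D1 = D2 by apply: (@JD_inj e); rewrite E1 E2.
      have : (AA `&` BB) D1 by split=> //; rewrite E.
      by rewrite d.
    + by apply: nY; rewrite -E2 -E1; exact: (@Jset_JD I e _ ei eI).
    + have [m Dm] := ne _ I1.
      by apply: (@JD_ne_fP e _ _ Dm); rewrite E1.
    + by apply: nY; rewrite -E1 -E2; exact: (@Jset_JD I e _ ei eI).
    + have : (AA `&` BB) Y' by [].
      by rewrite d.
    + by apply: nYfP; rewrite -E1.
  - apply: sub_finite_set (finite_image (fun m => m.*2.+1) fin).
    move=> n [h1 h2].
    have o : odd n by apply: odd_of_nfP => h; apply: (h2 fP) => //; right.
    exists n./2; last by rewrite -odd_dec.
    split.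
      move=> A AA_A; case: (sA _ AA_A) => [IA|/= EA].
        have : AS (JD e A) by left; exists A.
        by move/h1; rewrite {1}(@odd_dec n o) => /JD_odd.
      have : AS Y by right; split=> //; rewrite -EA.
      by move/h1; rewrite EA /Y' /= -odd_dec.
    move=> B BB_B; case: (sB _ BB_B) => [IB|/= EB].
      have : BS (JD e B) by left; left; exists B.
      move/h2 => h; apply/(JD_odd e); rewrite -odd_dec //.
    have : BS Y by left; right; split=> //; rewrite -EB.
    by move/h2; rewrite EB /Y' /= -odd_dec.
have indK : independent K.
  split; last exact: Hc.
  move=> A [/HI.1 //|/= ->].
  apply: (sub_infinite_set (A := comb [set Y'] set0)); first by move=> n [h _]; exact: h.
  apply: Hc; [exact: finite_set1|exact: finite_set0| |by []|by rewrite setI0].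
  by move=> Z /= ->; right.
have eqK := Hmax _ indK (fun A h => or_introl h).
by apply: IY'; rewrite -eqK; right.
Qed.

Lemma Jset_notdense (I : ifam) e : independent I -> injective e ->
  (forall k, I (e k)) -> ~ densely_maximal (Jset I e).
Proof.
move=> HI ei eI [_ HD].
pose X := double @` e 0.
pose h0 := fun Z : set nat => if pselect (Z = fP) then Some false else None.
have d0 : dom h0 `<=` [set fP].
  by move=> Z; rewrite /dom /h0 /=; case: pselect.
have FF0 : FF (Jset I e) h0.
  split; first exact: sub_finite_set d0 (finite_set1 _).
  by move=> Z /d0 /= ->; exact: (@Jset_fP I e ei eI).
have Xinf : infinite_set X by apply: inj_infinite; [exact: double_inj|exact: HI.1].
have [h' [[fh' sh'] [ext fin]]] := HD X h0 Xinf FF0.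
pose AA : ifam := [set Z | h' Z = Some false].
pose BB : ifam := [set Z | h' Z = Some true].
have sA : AA `<=` Jset I e by move=> Z hZ; apply: sh'; rewrite /dom /= hZ.
have sB : BB `<=` Jset I e by move=> Z hZ; apply: sh'; rewrite /dom /= hZ.
have fA : finite_set AA by apply: sub_finite_set fh' => Z hZ; rewrite /dom /= hZ.
have fB : finite_set BB by apply: sub_finite_set fh' => Z hZ; rewrite /dom /= hZ.
have AP : AA fP by apply: ext; rewrite /h0; case: pselect.
have nB : ~ BB fP.
  by rewrite /BB /=; move: AP; rewrite /AA /= => ->.
have d : AA `&` BB = set0.
  by apply/seteqP; split=> // Z [/= A1 B1]; move: B1; rewrite /BB /= A1.
have cb : comb AA BB `<=` bcomb h'.
  move=> n [h1 h2] Z [] E /=; [exact: h2|exact: h1].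
pose a := pre I e AA; pose b := pre I e BB.
have fa : finite_set (sg e @` a) by apply/finite_image/pre_fin.
have fb : finite_set (sg e @` b) by apply/finite_image/pre_fin.
have sa : sg e @` a `<=` I by move=> _ [D [ID _] <-]; apply: sg_I.
have sb : sg e @` b `<=` I by move=> _ [D [ID _] <-]; apply: sg_I.
have dab := sg_disj ei (pre_disj I e d).
have n0a : ~ (sg e @` a) (e 0) by move=> [D _]; apply: sg_ne0.
have n0b : ~ (sg e @` b) (e 0) by move=> [D _]; apply: sg_ne0.
case: fin => F.
- have inf : infinite_set (comb (sg e @` a) (sg e @` b `|` [set e 0])).
    apply: HI.2 => //.
    + by rewrite finite_setU; split=> //; exact: finite_set1.
    + by move=> Z [/sb|/= ->].
    + apply/seteqP; split=> // Z [h1 [h2|/= E]].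
        by have : (sg e @` a `&` sg e @` b) Z by []; rewrite dab.
      by apply: n0a; rewrite -E.
  apply: (inj_infinite double_inj inf); apply: sub_finite_set F.
  move=> _ [m hm <-]; split.
    apply: cb; apply: (comb_f eI sA sB nB (a := sg e @` a)
                                 (b := sg e @` b `|` [set e 0])) => //.
  move=> [m' e0m' /double_inj E]; apply: (hm.2 (e 0)); first by right.
  by rewrite -E.
- have inf : infinite_set (comb (sg e @` a `|` [set e 0]) (sg e @` b)).
    apply: HI.2 => //.
    + by rewrite finite_setU; split=> //; exact: finite_set1.
    + by move=> Z [/sa|/= ->].
    + apply/seteqP; split=> // Z [[h1|/= E] h2].
        by have : (sg e @` a `&` sg e @` b) Z by []; rewrite dab.
      by apply: n0b; rewrite -E.
  apply: (inj_infinite double_inj inf); apply: sub_finite_set F.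
  move=> _ [m hm <-]; split.
    apply: cb; apply: (comb_f eI sA sB nB (a := sg e @` a `|` [set e 0])
                                 (b := sg e @` b)) => //.
  exists m => //; apply: (hm.1 (e 0)); by right.
Qed.

Theorem proposition2p4 :
  forall I : ifam, mif I ->
    exists J : ifam, mif J /\ card_eq J I /\ ~ densely_maximal J.
Proof.
move=> I HmI; have HI := HmI.1.
have /infiniteP/pcard_leP/injfunPex [e eF eInj] := mif_infinite HmI.
have eI : forall k, I (e k) by move=> k; apply: eF.
have ei : injective e by move=> x y E; apply: eInj; rewrite ?in_setE.
have ne : forall D, I D -> exists m, D m.
  by move=> D /HI.1 /infinite_setN0 [m h]; exists m.
exists (Jset I e); split; first by split; [exact: Jset_indep|exact: Jset_max].
split; last exact: Jset_notdense.
exact: (@inj_card_eq _ _ I (ps e) (@ps_inj I e ei eI ne)).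
Qed.
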